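(* Let $p\geq 5$ be an integer and $s=\frac1p$. Let $n\geq 1$ be an integer. Then there is no integer strictly between $2\left(n-\frac12\right)^s$ and $2\left(n-\frac12+\frac{1}{2^{p+1}}\right)^s$. *)

(* Defs.v *)
From Stdlib Require Import Reals Lra Lia ZArith.

(* Main.v *)
Require Import Defs.
From Stdlib Require Import Reals ZArith.
From Stdlib Require Import Lra Lia.
Open Scope R_scope.

Lemma my_pow_lt (x y : R) (n : nat) : 0 <= x -> x < y -> (0 < n)%nat -> x ^ n < y ^ n.
Proof.
  intros Hx Hxy Hn. induction n as [|k IH]; [lia|].
  destruct k as [|k]. { simpl. lra. }
  assert (IH' := IH ltac:(lia)).
  change (x * x ^ S k < y * y ^ S k).
  assert (0 <= x ^ S k) by (apply pow_le; lra).
  nra.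
Qed.

Lemma Rpower_pos (x y : R) : 0 < Rpower x y.
Proof. unfold Rpower. apply exp_pos. Qed.

Lemma Rpower_inv_p (a : R) (p : nat) : 0 < a -> (0 < p)%nat ->
  Rpower a (1 / INR p) ^ p = a.
Proof.
  intros Ha Hp.
  rewrite <- Rpower_pow by apply Rpower_pos.
  rewrite Rpower_mult.
  replace (1 / INR p * INR p) with 1.
  - apply Rpower_1; auto.
  - assert (0 < INR p) by (apply lt_0_INR; lia). field. lra.
Qed.

Theorem lemma3p1 (p n : nat) (hp : (5 <= p)%nat) (hn : (1 <= n)%nat) :
  let s := 1 / INR p in
  ~ exists m : Z,
      2 * Rpower (INR n - 1/2) s < IZR m /\
      IZR m < 2 * Rpower (INR n - 1/2 + 1 / 2 ^ (p + 1)) s.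
Proof.
  intros s [m [H1 H2]]. unfold s in *.
  assert (Hn1 : 1 <= INR n) by (apply (le_INR 1); lia).
  set (a := INR n - 1/2) in *.
  assert (Ha : 0 < a) by (unfold a; lra).
  assert (H2p : 0 < 2 ^ (p+1)) by (apply pow_lt; lra).
  assert (Hb : 0 < a + 1 / 2 ^ (p+1)).
  { assert (0 < 1 / 2 ^ (p+1)) by (apply Rdiv_lt_0_compat; lra). lra. }
  assert (HA := Rpower_pos a (1 / INR p)). assert (HB := Rpower_pos (a + 1 / 2 ^ (p+1)) (1 / INR p)).
  set (y := IZR m / 2).
  assert (L1 : a < y ^ p).
  { rewrite <- (Rpower_inv_p a p) by (auto; lia).
    apply my_pow_lt; [lra | unfold y; lra | lia]. }
  assert (L2 : y ^ p < a + 1 / 2 ^ (p+1)).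
  { rewrite <- (Rpower_inv_p (a + 1 / 2 ^ (p+1)) p) by (auto; lia).
    apply my_pow_lt; [unfold y; lra | unfold y, s; lra | lia]. }
  destruct p as [|q]; [lia|].
  assert (Hy : y ^ S q * 2 ^ S q = IZR (m ^ Z.of_nat (S q))).
  { unfold y. rewrite <- Rpow_mult_distr, <- pow_IZR. f_equal. field. }
  assert (Ha2 : a * 2 ^ S q = IZR ((2 * Z.of_nat n - 1) * 2 ^ Z.of_nat q)).
  { rewrite mult_IZR, <- pow_IZR, minus_IZR, mult_IZR, <- INR_IZR_INZ.
    unfold a. simpl. field. }
  assert (Hq : 0 < 2 ^ q) by (apply pow_lt; lra).
  assert (E1 : a * 2 ^ S q < y ^ S q * 2 ^ S q).
  { apply Rmult_lt_compat_r; [apply pow_lt; lra | exact L1]. }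
  assert (E2 : y ^ S q * 2 ^ S q < a * 2 ^ S q + 1/2).
  { replace (a * 2 ^ S q + 1/2) with ((a + 1 / 2 ^ (S q + 1)) * 2 ^ S q).
    - apply Rmult_lt_compat_r; [apply pow_lt; lra | exact L2].
    - rewrite pow_add. simpl. field. lra. }
  rewrite Hy, Ha2 in *.
  apply lt_IZR in E1.
  assert (E3 : IZR (m ^ Z.of_nat (S q)) < IZR ((2 * Z.of_nat n - 1) * 2 ^ Z.of_nat q + 1))
    by (rewrite plus_IZR; lra).
  apply lt_IZR in E3. lia.
Qed.
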